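(* Let $0<\alpha<\pi/4$, $\beta=\pi/4$, and let $F,G_1,G_2$, $X_{\pm\pm}$, $s_{\max}$, $v$ be as in the context. Define $\bar M(s,\alpha)=e^{v(s)X_{++}}e^{v(s)X_{-+}}e^{v(s)X_{--}}e^{v(s)X_{+-}}$ and $\theta(\alpha)=\arcsin\left(\frac{-2\sqrt2\sin\alpha\cos\alpha}{1+\cos^2\alpha}\right)$. Then $$\bar M(0,\alpha)=\bar M(s_{\max},\alpha)=\begin{pmatrix}1&0&0\\0&\cos4\theta(\alpha)&\sin4\theta(\alpha)\\0&-\sin4\theta(\alpha)&\cos4\theta(\alpha)\end{pmatrix}.$$
   Context: $F=\cos\alpha\begin{pmatrix}0&-1&0\\1&0&0\\0&0&0\end{pmatrix}$, $G_1=\sin\alpha\sin\beta\begin{pmatrix}0&0&0\\0&0&-1\\0&1&0\end{pmatrix}$, $G_2=\sin\alpha\cos\beta\begin{pmatrix}0&0&-1\\0&0&0\\1&0&0\end{pmatrix}$, and $X_{ab}=F+aG_1+bG_2$ for $a,b\in\{+1,-1\}$. $s_{\max}=\arccos\left(-\frac{\sin^2\alpha}{1+\cos^2\alpha}\right)$. For $s\in[0,s_{\max}]$, $v(s)=\arccos\left[\frac{d-A(s)-B(s)-C(s)}{e-A(s)+B(s)}\right]$ with $A(s)=8\cos\alpha\sin^2\alpha\sin s$, $B(s)=2\sin^2(2\alpha)\cos s$, $C(s)=4\sin^4\alpha\cos(2s)$, $d=\sin^2(2\alpha)$, $e=5+2\cos2\alpha+\cos4\alpha$; this is the duration of interior bang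 arcs of normal extremals of $\dot x=(F+u_1G_1+u_2G_2)x$ on $S^2$ starting from $(0,0,1)$ whose first bang arc has duration $s$. *)

(* Defs.v *)
From HB Require Import structures.
From mathcomp Require Import all_boot all_order all_algebra.
From mathcomp Require Import all_classical all_reals all_analysis.
Set Implicit Arguments. Unset Strict Implicit. Unset Printing Implicit Defensive.
Import Order.TTheory GRing.Theory Num.Theory numFieldNormedType.Exports.
Local Open Scope ring_scope.

Section Defs.
Variable R : realType.

Definition mx3 (L : seq (seq R)) : 'M[R]_3 :=
  \matrix_(i < 3, j < 3) nth 0 (nth [::] L i) j.

Definition expm (A : 'M[R]_3) : 'M[R]_3 :=
  \matrix_(i, j) limn (fun N : nat => ((\sum_(k < N) (k`!%:R)^-1 *: A ^+ k) i j : R)).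

Definition Fm (al : R) : 'M[R]_3 :=
  cos al *: mx3 [:: [:: 0; -1; 0]; [:: 1; 0; 0]; [:: 0; 0; 0]].
Definition G1m (al be : R) : 'M[R]_3 :=
  (sin al * sin be) *: mx3 [:: [:: 0; 0; 0]; [:: 0; 0; -1]; [:: 0; 1; 0]].
Definition G2m (al be : R) : 'M[R]_3 :=
  (sin al * cos be) *: mx3 [:: [:: 0; 0; -1]; [:: 0; 0; 0]; [:: 1; 0; 0]].

(* X_{ab} = F + a G1 + b G2, a b in {+1,-1} *)
Definition Xm (al be a b : R) : 'M[R]_3 := Fm al + a *: G1m al be + b *: G2m al be.

Definition smax (al : R) : R := acos (- (sin al ^+ 2) / (1 + cos al ^+ 2)).

Definition vdur (al s : R) : R :=
  let A := 8 * cos al * sin al ^+ 2 * sin s in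
  let B := 2 * sin (2 * al) ^+ 2 * cos s in
  let C := 4 * sin al ^+ 4 * cos (2 * s) in
  let d := sin (2 * al) ^+ 2 in
  let e := 5 + 2 * cos (2 * al) + cos (4 * al) in
  acos ((d - A - B - C) / (e - A + B)).

Definition Mbar (s al : R) : 'M[R]_3 :=
  let be := pi / 4 in
  let v := vdur al s in
  expm (v *: Xm al be 1 1) *m expm (v *: Xm al be (-1) 1)
  *m expm (v *: Xm al be (-1) (-1)) *m expm (v *: Xm al be 1 (-1)).

Definition thetaa (al : R) : R :=
  asin ((- 2 * Num.sqrt 2 * sin al * cos al) / (1 + cos al ^+ 2)).

Definition rotx (t : R) : 'M[R]_3 :=
  mx3 [:: [:: 1; 0; 0]; [:: 0; cos t; sin t]; [:: 0; - sin t; cos t]].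

End Defs.

(* Main.v *)
Require Import Defs.
From HB Require Import structures.
From mathcomp Require Import all_boot all_order all_algebra.
From mathcomp Require Import all_classical all_reals all_analysis.
From mathcomp Require Import ring lra.
Import Order.TTheory GRing.Theory Num.Theory numFieldNormedType.Exports.
Local Open Scope classical_set_scope.
Local Open Scope ring_scope.

Section S.
Variable R : realType.

Lemma cvg_sin_series (w : R) : series (sin_coeff w) @ \oo --> sin w.
Proof. rewrite sin.unlock; exact: is_cvg_series_sin_coeff. Qed.
Lemma cvg_cos_series (w : R) : series (cos_coeff w) @ \oo --> cos w.
Proof. rewrite cos.unlock; exact: is_cvg_series_cos_coeff. Qed.

Lemma powA (A : 'M[R]_3) : A ^+ 3 = - A ->
  forall m, A ^+ m.*2.+1 = (-1) ^+ m *: A /\ A ^+ m.*2.+2 = (-1) ^+ m *: A ^+ 2.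
Proof.
move=> HA; elim=> [|m [IH1 IH2]]; first by rewrite !expr0 !scale1r.
have rec : forall n, A ^+ n.+3 = - A ^+ n.+1.
  move=> n; have -> : n.+3 = (n + 3)%N by rewrite addn3.
  by rewrite exprD HA mulrN -exprSr.
rewrite doubleS !rec IH1 IH2.
by split; rewrite [(-1) ^+ m.+1]exprS mulN1r scaleNr.
Qed.

Lemma term_eq (A : 'M[R]_3) (w : R) : A ^+ 3 = - A -> forall k,
  (k`!%:R)^-1 *: (w *: A) ^+ k =
  sin_coeff w k *: A - cos_coeff w k *: A ^+ 2 + (k == 0)%:R *: (1 + A ^+ 2).
Proof.
move=> HA k; rewrite exprZn scalerA.
rewrite -[k]odd_double_half; case: (odd k) => /=; set m := k./2.
- rewrite add1n (powA _ HA m).1 /sin_coeff /cos_coeff /= odd_double /= scale0r addr0.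
  rewrite !mul0r scale0r subr0 scalerA half_double; congr (_ *: _).
  field.
  by rewrite pnatr_eq0 -lt0n fact_gt0.
- rewrite add0n; case: m => [|m].
    rewrite /= expr0 /sin_coeff /cos_coeff /= !scale1r; rewrite !(mul1r,mul0r,invr1,scale0r,sub0r,scale1r).
    by rewrite /= expr0 addrCA addNr addr0.
  have -> : (m.+1).*2 = m.*2.+2 by [].
  rewrite (powA _ HA m).2 /sin_coeff /cos_coeff /= odd_double /=.
  rewrite !mul0r scale0r sub0r scale0r addr0 scalerA -scaleNr; congr (_ *: _).
  rewrite half_double -exprnP [(-1) ^+ m.+1]exprS.
  set f := (_ `!)%:R; set x := w ^+ _; set y := (-1) ^+ m; ring.
Qed.


Lemma expm_rod (A : 'M[R]_3) (w : R) : A ^+ 3 = - A ->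
  expm (w *: A) = 1 + sin w *: A + (1 - cos w) *: A ^+ 2.
Proof.
move=> HA; apply/matrixP => i j; rewrite /expm mxE.
have E : forall N, (\sum_(k < N) (k`!%:R)^-1 *: (w *: A) ^+ k) i j =
  series (sin_coeff w) N * A i j - series (cos_coeff w) N * (A ^+ 2) i j
  + (0 < N)%:R * (1 + A ^+ 2) i j.
  move=> N; under eq_bigr do rewrite term_eq //.
  rewrite !big_split /= sumrN -!scaler_suml !mxE /series /= !big_mkord.
  congr (_ + _ * _).
  case: N => [|N]; first by rewrite big_ord0.
  by rewrite big_ord_recl /= big1 ?addr0.
rewrite (_ : (fun N => _) = (fun N => series (sin_coeff w) N * A i j - series (cos_coeff w) N * (A ^+ 2) i j
  + (0 < N)%:R * (1 + A ^+ 2) i j)); last by apply/funext => N; exact: E.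
have -> : (1 + sin w *: A + (1 - cos w) *: A ^+ 2) i j =
   sin w * A i j - cos w * (A ^+ 2) i j + 1 * (1 + A ^+ 2) i j.
  rewrite !mxE; ring.
apply: (cvg_lim (@Rhausdorff R)); apply: cvgD; first apply: cvgB.
- by apply: cvgMr_tmp; exact: cvg_sin_series.
- by apply: cvgMr_tmp; exact: cvg_cos_series.
- apply: cvgMr_tmp; apply: cvg_near_cst; exists 1%N => // N /= HN.
  by rewrite HN.
Qed.

Definition M3 (a b c d e f g h i : R) : 'M[R]_3 :=
  mx3 [:: [:: a; b; c]; [:: d; e; f]; [:: g; h; i]].


Lemma mul_M3 a b c d e f g h i a' b' c' d' e' f' g' h' i' :
  M3 a b c d e f g h i *m M3 a' b' c' d' e' f' g' h' i' =
  M3 (a*a' + b*d' + c*g') (a*b' + b*e' + c*h') (a*c' + b*f' + c*i')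
     (d*a' + e*d' + f*g') (d*b' + e*e' + f*h') (d*c' + e*f' + f*i')
     (g*a' + h*d' + i*g') (g*b' + h*e' + i*h') (g*c' + h*f' + i*i').
Proof.
apply/matrixP => x y; rewrite !mxE !big_ord_recr big_ord0 /= add0r !mxE.
by case: x => [[|[|[|?]]] Hx] //; case: y => [[|[|[|?]]] Hy].
Qed.

Lemma add_M3 a b c d e f g h i a' b' c' d' e' f' g' h' i' :
  M3 a b c d e f g h i + M3 a' b' c' d' e' f' g' h' i' =
  M3 (a+a') (b+b') (c+c') (d+d') (e+e') (f+f') (g+g') (h+h') (i+i').
Proof.
apply/matrixP => x y; rewrite !mxE.
by case: x => [[|[|[|?]]] Hx] //; case: y => [[|[|[|?]]] Hy] //=; rewrite addr0.
Qed.

Lemma scale_M3 k a b c d e f g h i :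
  k *: M3 a b c d e f g h i = M3 (k*a) (k*b) (k*c) (k*d) (k*e) (k*f) (k*g) (k*h) (k*i).
Proof.
apply/matrixP => x y; rewrite !mxE.
by case: x => [[|[|[|?]]] Hx] //; case: y => [[|[|[|?]]] Hy] //=; rewrite mulr0.
Qed.

Lemma one_M3 : (1 : 'M[R]_3) = M3 1 0 0 0 1 0 0 0 1.
Proof.
apply/matrixP => x y; rewrite !mxE.
by case: x => [[|[|[|?]]] Hx] //; case: y => [[|[|[|?]]] Hy].
Qed.

Definition Xs (c u a b : R) := M3 0 (-c) (-(b*u)) c 0 (-(a*u)) (b*u) (a*u) 0.
Definition Es (c u sw cw a b : R) :=
  1 + sw *: Xs c u a b + (1 - cw) *: (Xs c u a b *m Xs c u a b).

Lemma mat_alg (c u sw cw sth cth t : R) :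
  c = (1 - 2 * t^+2) / (1 + 2 * t^+2) -> u = 2 * t / (1 + 2 * t^+2) ->
  sw = 2 * c / (1 + c^+2) -> cw = (c^+2 - 1) / (1 + c^+2) ->
  sth = - 4 * u * c / (1 + c^+2) -> cth = (3 * c^+2 - 1) / (1 + c^+2) ->
  let c2 := cth^+2 - sth^+2 in let s2 := 2 * sth * cth in
  let c4 := c2^+2 - s2^+2 in let s4 := 2 * s2 * c2 in
  Es c u sw cw 1 1 *m Es c u sw cw (-1) 1 *m Es c u sw cw (-1) (-1) *m Es c u sw cw 1 (-1)
  = M3 1 0 0 0 c4 s4 0 (- s4) c4.
Proof.
move=> Hc Hu Hsw Hcw Hsth Hcth c2 s2 c4 s4.
rewrite /c4 /s4 /c2 /s2 Hsth Hcth Hsw Hcw {Hsth Hcth Hsw Hcw}.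
rewrite /Es /Xs !mul_M3 !scale_M3 one_M3 !add_M3 !mul_M3.
have ht0 : 0 < 1 + 2 * t^+2 by rewrite ltr_pwDl // mulr_ge0 // sqr_ge0.
have ht : 1 + 2 * t^+2 != 0 by rewrite lt0r_neq0.
have ht2 : (1 + 2 * t ^+ 2) ^+ 2 + (1 - 2 * t ^+ 2) ^+ 2 != 0.
  by rewrite lt0r_neq0 // ltr_wpDr ?sqr_ge0 // exprn_gt0.
by congr M3; rewrite Hu Hc; field; rewrite ht ht2.
Qed.
Lemma param (m c v : R) : 0 < m -> c^+2 + m * v^+2 = 1 -> 0 < 1 + c ->
  c = (1 - m * (v/(1+c))^+2) / (1 + m * (v/(1+c))^+2) /\
  v = 2 * (v/(1+c)) / (1 + m * (v/(1+c))^+2).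
Proof.
move=> hm h hc; have hc0 : 1 + c != 0 by rewrite lt0r_neq0.
have hv : m * v^+2 = 1 - c^+2 by rewrite -h addrAC subrr add0r.
have H : m * (v/(1+c))^+2 = 2/(1+c) - 1.
  by rewrite expr_div_n mulrA hv; field.
by split; rewrite H; field; rewrite hc0 mulN1r addrC subrK pnatr_eq0.
Qed.

Lemma Xm_eq (al a b : R) : cos (pi/4 : R) = sin (pi/4) ->
  Xm al (pi/4) a b = Xs (cos al) (sin al * sin (pi/4)) a b.
Proof.
move=> h; apply/matrixP => x y; rewrite /Xm /Fm /G1m /G2m h !mxE.
by case: x => [[|[|[|?]]] Hx] //; case: y => [[|[|[|?]]] Hy] //=; ring.
Qed.

Lemma X3 (c u a b t : R) : (a = 1 \/ a = -1) -> (b = 1 \/ b = -1) ->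
  c = (1 - 2 * t^+2) / (1 + 2 * t^+2) -> u = 2 * t / (1 + 2 * t^+2) ->
  Xs c u a b ^+ 3 = - Xs c u a b.
Proof.
move=> ha hb Hc Hu.
have ht0 : 0 < 1 + 2 * t^+2 by rewrite ltr_pwDl // mulr_ge0 // sqr_ge0.
have ht : 1 + 2 * t^+2 != 0 by rewrite lt0r_neq0.
rewrite !exprS expr0 mulr1 -!mulmxE /Xs !mul_M3 -[RHS]scaleN1r scale_M3.
by move: ha hb => [->|->] [->|->]; congr M3; rewrite Hu Hc; field.
Qed.

Lemma param_ex (m c v : R) : 0 < m -> c^+2 + m * v^+2 = 1 -> 0 < 1 + c ->
  exists t, c = (1 - m * t^+2) / (1 + m * t^+2) /\ v = 2 * t / (1 + m * t^+2).
Proof. by move=> hm h hc; exists (v / (1 + c)); exact: param. Qed.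

Lemma div_eq_l (x y k : R) : y != 0 -> x = k * y -> x / y = k.
Proof. by move=> hy ->; rewrite mulfK. Qed.

Lemma neq0_of_eq (y z : R) : y = z -> 0 < z -> y != 0.
Proof. by move=> -> hz; rewrite lt0r_neq0. Qed.

End S.
Arguments param_ex {R}. Arguments Xm_eq {R}. Arguments X3 {R}.
Arguments div_eq_l {R}. Arguments neq0_of_eq {R}.
Arguments Xs {R}. Arguments Es {R}. Arguments M3 {R}.
Arguments mul_M3 {R}. Arguments scale_M3 {R}. Arguments add_M3 {R}. Arguments one_M3 {R}.
Arguments expm_rod {R}. Arguments mat_alg {R}.

Theorem corollary6 (R : realType) (al : R) :
  0 < al -> al < pi / 4 ->
  Mbar 0 al = rotx (4 * thetaa al) /\ Mbar (smax al) al = rotx (4 * thetaa al).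
Proof.
move=> h0 h4.
have hpi := @pi_gt0 R.
have hq : 0 < (pi / 4 : R) < pi / 2 by apply/andP; split; lra.
have hk0 : 0 < sin (pi / 4 : R) by apply: sin_gt0_pihalf.
have hck0 : 0 < cos (pi / 4 : R).
  by apply: cos_gt0_pihalf; apply/andP; split; lra.
have hcsk : cos (pi / 4 : R) ^+ 2 = sin (pi / 4) ^+ 2.
  have := @cos_pihalf R; rewrite (_ : pi / 2 = pi / 4 + pi / 4); last by field.
  by rewrite cosD -!expr2 => /eqP; rewrite subr_eq0 => /eqP.
have hk0c : cos (pi / 4 : R) = sin (pi / 4).
  by apply/eqP; rewrite -(eqrXn2 (n := 2)) // ?hcsk // ltW.
have hk02 : 2 * sin (pi / 4 : R) ^+ 2 = 1.
  by have := cos2Dsin2 (pi / 4 : R); rewrite hk0c; lra.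
have hpi2 : al < pi / 2 by lra.
have hc : 0 < cos al by apply: cos_gt0_pihalf; apply/andP; split; lra.
have hs : 0 < sin al by apply: sin_gt0_pihalf; apply/andP; split; lra.
have hcs := cos2Dsin2 al.
have hc2 : sin al ^+ 2 < cos al ^+ 2.
  have : 0 < cos (al + al) by apply: cos_gt0_pihalf; apply/andP; split; lra.
  by rewrite cosD -!expr2 subr_gt0.
have [t1 [Hc1 Hs1]] := param_ex 1 (cos al) (sin al) ltr01 ltac:(by rewrite mul1r) ltac:(lra).
have hu : cos al ^+ 2 + 2 * (sin al * sin (pi / 4)) ^+ 2 = 1.
  by rewrite exprMn mulrCA hk02 mulr1.
have [t2 [Hc2 Hu2]] := param_ex 2 (cos al) (sin al * sin (pi / 4)) (ltr0Sn _ 1) hu ltac:(lra).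
have hp1 : 0 < 1 + cos al ^+ 2 by lra.
have hp1n : 1 + cos al ^+ 2 != 0 by rewrite lt0r_neq0.
have ht1p : 0 < 1 + t1 ^+ 2 by rewrite ltr_pwDl // sqr_ge0.
have ht1a : 1 + t1 ^+ 2 != 0 by rewrite lt0r_neq0.
have ht1b : (1 + t1 ^+ 2) ^+ 2 + (1 - t1 ^+ 2) ^+ 2 != 0.
  by rewrite lt0r_neq0 // ltr_wpDr ?sqr_ge0 // exprn_gt0.
have ht2p : 0 < 1 + 2 * t2 ^+ 2 by rewrite ltr_pwDl // mulr_ge0 // sqr_ge0.
have ht2a : 1 + 2 * t2 ^+ 2 != 0 by rewrite lt0r_neq0.
have ht2b : (1 + 2 * t2 ^+ 2) ^+ 2 + (1 - 2 * t2 ^+ 2) ^+ 2 != 0.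
  by rewrite lt0r_neq0 // ltr_wpDr ?sqr_ge0 // exprn_gt0.
have hkk : -1 <= - (sin al ^+ 2) / (1 + cos al ^+ 2) <= 1.
  by apply/andP; split; [rewrite ler_pdivlMr // | rewrite ler_pdivrMr //]; lra.
have hcosW : cos (smax al) = (cos al ^+ 2 - 1) / (1 + cos al ^+ 2).
  rewrite /smax acosK; last by rewrite in_itv /= hkk.
  by rewrite sin2cos2; field.
have hsinW : sin (smax al) = 2 * cos al / (1 + cos al ^+ 2).
  rewrite /smax sin_acos // (_ : _ - _ = (2 * cos al / (1 + cos al ^+ 2)) ^+ 2).
    by rewrite sqrtr_sqr ger0_norm // divr_ge0 // ?mulr_ge0 // ltW.
  by rewrite Hc1 Hs1; field; rewrite ?ht1a ?ht1b.
have e2 : forall x : R, 2 * x = x + x by move=> x; ring.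
have e4 : 4 * al = (al + al) + (al + al) by ring.
have hv0 : vdur al 0 = smax al.
  rewrite /vdur /smax; cbv zeta; rewrite sin0 !mulr0 !cos0 e4 e2 !cosD !sinD.
  congr acos; apply: div_eq_l.
    apply: (@neq0_of_eq R _ (4 * (1 + cos al ^+ 2))); last by rewrite mulr_gt0.
    by rewrite Hc1 Hs1; field; rewrite ?ht1a ?ht1b.
  by rewrite Hc1 Hs1; field; rewrite ?ht1a ?ht1b.
have h3c : 0 < 3 * cos al ^+ 2 - 1 by lra.
have hvm : vdur al (smax al) = smax al.
  transitivity (acos (- (sin al ^+ 2) / (1 + cos al ^+ 2))); last by [].
  rewrite /vdur; cbv zeta; rewrite e4 !e2 !cosD !sinD hsinW hcosW.
  congr acos; apply: div_eq_l.
    apply: (@neq0_of_eq R _ (4 * (3 * cos al ^+ 2 - 1) ^+ 2 / (1 + cos al ^+ 2))).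
      by rewrite Hc1 Hs1; field; rewrite ?ht1a ?ht1b.
    by rewrite divr_gt0 // mulr_gt0 // exprn_gt0.
  by rewrite Hc1 Hs1; field; rewrite ?ht1a ?ht1b.
have hsq2 : Num.sqrt 2 = 2 * sin (pi / 4 : R).
  have e : (2 * sin (pi / 4 : R)) ^+ 2 = 2.
    by rewrite exprMn expr2 -mulrA hk02 mulr1.
  by rewrite -[X in Num.sqrt X]e sqrtr_sqr ger0_norm // mulr_ge0 // ltW.
have hX0 : (- 2 * Num.sqrt 2 * sin al * cos al) / (1 + cos al ^+ 2) =
   - 4 * (sin al * sin (pi / 4)) * cos al / (1 + cos al ^+ 2).
  by rewrite hsq2; ring.
have h1X : 1 - ((- 2 * Num.sqrt 2 * sin al * cos al) / (1 + cos al ^+ 2)) ^+ 2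
   = ((3 * cos al ^+ 2 - 1) / (1 + cos al ^+ 2)) ^+ 2.
  by rewrite hX0 Hu2 Hc2; field; rewrite ?ht2a ?ht2b.
have hXb : -1 <= (- 2 * Num.sqrt 2 * sin al * cos al) / (1 + cos al ^+ 2) <= 1.
  have : 0 <= 1 - ((- 2 * Num.sqrt 2 * sin al * cos al) / (1 + cos al ^+ 2)) ^+ 2.
    by rewrite h1X sqr_ge0.
  by move=> h; apply/andP; split; nra.
have hsinth : sin (thetaa al) = - 4 * (sin al * sin (pi / 4)) * cos al / (1 + cos al ^+ 2).
  rewrite /thetaa asinK; first exact: hX0.
  by rewrite in_itv /=; case/andP: hXb => -> ->.
have hcosth : cos (thetaa al) = (3 * cos al ^+ 2 - 1) / (1 + cos al ^+ 2).
  rewrite /thetaa cos_asin // h1X sqrtr_sqr ger0_norm // divr_ge0 // ltW //.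
have hE : forall a b, (a = 1 \/ a = -1) -> (b = 1 \/ b = -1) ->
    expm (smax al *: Xs (cos al) (sin al * sin (pi / 4)) a b) =
    Es (cos al) (sin al * sin (pi / 4)) (sin (smax al)) (cos (smax al)) a b.
  move=> a b ha hb; rewrite expm_rod; first by rewrite expr2.
  exact: (X3 _ _ _ _ t2 ha hb Hc2 Hu2).
have key : forall x, vdur al x = smax al -> Mbar x al = rotx (4 * thetaa al).
  move=> x hx; rewrite /Mbar; cbv zeta; rewrite hx !Xm_eq // !hE; try by [left|right].
  rewrite (mat_alg _ _ _ _ (sin (thetaa al)) (cos (thetaa al)) t2 Hc2 Hu2 hsinW hcosW hsinth hcosth).
  cbv zeta; rewrite /rotx /M3.
  have e4' : 4 * thetaa al = (thetaa al + thetaa al) + (thetaa al + thetaa al) by ring.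
  rewrite e4' !(cosD, sinD).
  by congr (mx3 [:: [:: _; _; _]; [:: _; _; _]; [:: _; _; _]]); ring.
by split; apply: key.
Qed.
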